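(* Let $V$ be a real Hilbert space, $\mathcal D$ a dictionary, $V_n\subset V$ a subspace of dimension $n$ with orthonormal basis $\Phi=(\phi_1,\dots,\phi_n)$, and $\kappa\in(0,1)$. Let $(W_m)_{m\ge0}$ be generated by the collective OMP algorithm with parameter $\kappa$. Then for every $\Psi=(\psi_1,\dots,\psi_n)\in V^n$, $$r_m\le4\frac{\|\Psi\|_{\ell^1(\mathcal D)}^2}{\kappa^2}(m+1)^{-1}+\|\Phi-\Psi\|^2\qquad\text{for all }m\ge1,$$ where $\|\Phi-\Psi\|^2=\sum_{i=1}^n\|\phi_i-\psi_i\|^2$.
   Context: A dictionary is a set $\mathcal D\subset V$ of elements with $\|\omega\|=1$ for all $\omega\in\mathcal D$ whose finite linear combinations are dense in $V$. Collective OMP: $W_0=\{0\}$; for $k\ge1$, choose $\omega_k\in\mathcal D$ with $$\sum_{i=1}^n|\langle\phi_i-P_{W_{k-1}}\phi_i,\omega_k\rangle|^2\ge\kappa^2\sup_{\omega\in\mathcal D}\sum_{i=1}^n|\langle\phi_i-P_{W_{k-1}}\phi_i,\omega\rangle|^2,$$ and set $W_k=\operatorname{span}\{\omega_1,\dots,\omega_k\}$ ($P_X$ is the orthogonal projection onto $X$). The residual is $r_m=\sum_{i=1}^n\|\phi_i-P_{W_m}\phi_i\|^2$. For $\Psi\in V^n$, $\|\Psi\|_{\ell^1(\mathcal D)}=\inf\{\sum_{\omega\in\mathcal D}\|c_\omega\|_2:\psi_i=\sum_{\omega\in\mathcal D}c_{\omega,i}\,\omega,\ i=1,\dots,n\}$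 with $c_\omega\in\mathbb R^n$ (countably many nonzero; infimum of the empty set is $+\infty$). *)

(* Defs.v *)
From HB Require Import structures.
From mathcomp Require Import all_boot all_order all_algebra.
From mathcomp Require Import all_classical all_reals all_analysis.
Set Implicit Arguments. Unset Strict Implicit. Unset Printing Implicit Defensive.
Import Order.TTheory GRing.Theory Num.Theory.
Import numFieldNormedType.Exports.
Local Open Scope classical_set_scope.
Local Open Scope ring_scope.

Section Defs.
Variables (R : realType) (V : completeNormedModType R).

(* [inner] is an inner product on V inducing the norm of V; together with
   completeness of V this makes V a real Hilbert space. *)
Definition is_inner_product (inner : V -> V -> R) : Prop :=
  [/\ (forall a x y z, inner (a *: x + y) z = a * inner x z + inner y z),
      (forall x y, inner x y = inner y x) &
      (forall x, inner x x = `|x| ^+ 2)].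

Definition span_set (D : set V) : set V :=
  [set x | exists (k : nat) (w : 'I_k -> V) (a : 'I_k -> R),
     (forall j, D (w j)) /\ x = \sum_(j < k) a j *: w j].

Definition is_dictionary (D : set V) : Prop :=
  (forall w, D w -> `|w| = 1) /\ closure (span_set D) = setT.

Definition Wspan (omega : nat -> V) (m : nat) : set V :=
  [set x | exists a : 'I_m -> R, x = \sum_(j < m) a j *: omega j.+1].

(* orthogonal projection onto W (well defined when W is a finite-dimensional
   subspace: the unique p in W with x - p orthogonal to W) *)
Definition proj (inner : V -> V -> R) (W : set V) (x : V) : V :=
  xget 0 [set p | W p /\ forall w, W w -> inner (x - p) w = 0].

Definition is_orthonormal (inner : V -> V -> R) n (phi : 'I_n -> V) : Prop :=
  forall i j, inner (phi i) (phi j) = (i == j)%:R.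

Definition collective_omp (inner : V -> V -> R) (D : set V) n
    (phi : 'I_n -> V) (kappa : R) (omega : nat -> V) : Prop :=
  forall k : nat,
    D (omega k.+1) /\
    \sum_(i < n) (inner (phi i - proj inner (Wspan omega k) (phi i))
                        (omega k.+1)) ^+ 2
    >= kappa ^+ 2 *
       sup [set \sum_(i < n) (inner (phi i - proj inner (Wspan omega k) (phi i))
                                    w) ^+ 2 | w in D].

Definition residual (inner : V -> V -> R) n (phi : 'I_n -> V)
    (omega : nat -> V) (m : nat) : R :=
  \sum_(i < n) `|phi i - proj inner (Wspan omega m) (phi i)| ^+ 2.

Definition l1_representation (D : set V) n (psi : 'I_n -> V)
    (w : nat -> V) (c : nat -> 'I_n -> R) : Prop :=
  (forall k, D (w k)) /\
  (forall i, series (fun k => c k i *: w k) @ \oo --> psi i).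

Definition l1_cost n (c : nat -> 'I_n -> R) : \bar R :=
  (\sum_(0 <= k <oo) (Num.sqrt (\sum_(i < n) (c k i) ^+ 2))%:E)%E.

Definition l1_norm (D : set V) n (psi : 'I_n -> V) : \bar R :=
  ereal_inf [set l1_cost c | c in
    [set c | exists w, l1_representation D psi w c]].

End Defs.

(* Main.v *)
Require Import Defs.
From HB Require Import structures.
From mathcomp Require Import all_boot all_order all_algebra.
From mathcomp Require Import all_classical all_reals all_analysis.
From mathcomp Require Import ring lra.
Import Order.TTheory GRing.Theory Num.Theory.
Import numFieldNormedType.Exports.
Local Open Scope classical_set_scope.
Local Open Scope ring_scope.
Set Implicit Arguments. Unset Strict Implicit. Unset Printing Implicit Defensive.
Require Import Defs.

Lemma CSalg (R : realFieldType) (a b s : R) : s != 0 ->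
 a * s - b ^+ 2 = s * (a - 2 * (b / s * b) + (b / s) ^+ 2 * s).
Proof. move=> h. field. exact h. Qed.

Section Inner.
Variables (R : realType) (V : completeNormedModType R) (inner : V -> V -> R).
Hypothesis Hi : is_inner_product inner.

Lemma ilin a x y z : inner (a *: x + y) z = a * inner x z + inner y z.
Proof. by case: Hi. Qed.
Lemma isym x y : inner x y = inner y x.
Proof. by case: Hi. Qed.
Lemma inorm x : inner x x = `|x| ^+ 2.
Proof. by case: Hi. Qed.

Lemma iDl x y z : inner (x + y) z = inner x z + inner y z.
Proof. by rewrite -{1}[x]scale1r ilin mul1r. Qed.
Lemma i0l z : inner 0 z = 0.
Proof. have := iDl 0 0 z; rewrite addr0 => H.
by apply: (addIr (inner 0 z)); rewrite add0r -H. Qed.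
Lemma iZl a x z : inner (a *: x) z = a * inner x z.
Proof. by rewrite -[a *: x]addr0 ilin i0l addr0. Qed.
Lemma iNl x z : inner (- x) z = - inner x z.
Proof. by rewrite -scaleN1r iZl mulN1r. Qed.
Lemma iBl x y z : inner (x - y) z = inner x z - inner y z.
Proof. by rewrite iDl iNl. Qed.
Lemma i0r z : inner z 0 = 0.
Proof. by rewrite isym i0l. Qed.
Lemma iDr x y z : inner z (x + y) = inner z x + inner z y.
Proof. by rewrite isym iDl !(isym z). Qed.
Lemma iZr a x z : inner z (a *: x) = a * inner z x.
Proof. by rewrite isym iZl isym. Qed.
Lemma iNr x z : inner z (- x) = - inner z x.
Proof. by rewrite isym iNl isym. Qed.
Lemma iBr x y z : inner z (x - y) = inner z x - inner z y.
Proof. by rewrite iDr iNr. Qed.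
Lemma isuml I (r : seq I) (P : pred I) (F : I -> V) z :
  inner (\sum_(i <- r | P i) F i) z = \sum_(i <- r | P i) inner (F i) z.
Proof.
elim/big_rec2: _ => [|i y1 y2 _ <-]; first exact: i0l.
by rewrite iDl.
Qed.
Lemma isumr I (r : seq I) (P : pred I) (F : I -> V) z :
  inner z (\sum_(i <- r | P i) F i) = \sum_(i <- r | P i) inner z (F i).
Proof.
rewrite isym isuml; apply: eq_bigr => i _; exact: isym.
Qed.

Lemma normD2 x y : `|x + y| ^+ 2 = `|x| ^+ 2 + 2 * inner x y + `|y| ^+ 2.
Proof. rewrite -!inorm iDl !iDr (isym y x); ring. Qed.
Lemma normB2 x y : `|x - y| ^+ 2 = `|x| ^+ 2 - 2 * inner x y + `|y| ^+ 2.
Proof. by rewrite normD2 iNr normrN; ring. Qed.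

Lemma CS2 x y : inner x y ^+ 2 <= `|x| ^+ 2 * `|y| ^+ 2.
Proof.
have [y0|y0] := eqVneq `|y| 0.
  by move/eqP: y0; rewrite normr_eq0 => /eqP ->; rewrite i0r normr0 !expr0n /= mulr0.
have hy : 0 < `|y| ^+ 2 by rewrite exprn_gt0 // lt_def y0 normr_ge0.
set t := inner x y / `|y| ^+ 2.
have := sqr_ge0 `|x - t *: y|; rewrite normB2 iZr normrZ exprMn.
rewrite real_normK ?num_real // /t => H.
rewrite -subr_ge0.
have e : `|x| ^+ 2 * `|y| ^+ 2 - inner x y ^+ 2 =
  `|y| ^+ 2 * (`|x| ^+ 2 - 2 * (inner x y / `|y| ^+ 2 * inner x y) +
         (inner x y / `|y| ^+ 2) ^+ 2 * `|y| ^+ 2).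
  by apply: CSalg; rewrite gt_eqF.
by rewrite e mulr_ge0 // ltW.
Qed.

Lemma CSabs x y : `|inner x y| <= `|x| * `|y|.
Proof.
rewrite -(@ler_pXn2r _ 2) ?nnegrE ?mulr_ge0 //.
by rewrite real_normK ?num_real // exprMn CS2.
Qed.
Lemma CS x y : inner x y <= `|x| * `|y|.
Proof. exact: le_trans (ler_norm _) (CSabs x y). Qed.

End Inner.

Section Span.
Variables (R : realType) (V : completeNormedModType R) (omega : nat -> V).
Local Notation W := (Wspan omega).

Lemma W0 m : W m 0.
Proof. by exists (fun => 0); rewrite big1 // => j _; rewrite scale0r. Qed.
Lemma WD m x y : W m x -> W m y -> W m (x + y).
Proof.
move=> [a ->] [b ->]; exists (fun j => a j + b j).
by rewrite -big_split; apply: eq_bigr => j _; rewrite scalerDl.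
Qed.
Lemma WZ m c x : W m x -> W m (c *: x).
Proof.
move=> [a ->]; exists (fun j => c * a j).
by rewrite scaler_sumr; apply: eq_bigr => j _; rewrite scalerA.
Qed.
Lemma WN m x : W m x -> W m (- x).
Proof. by move=> h; rewrite -scaleN1r; apply: WZ. Qed.
Lemma WB m x y : W m x -> W m y -> W m (x - y).
Proof. by move=> hx hy; apply: WD => //; apply: WN. Qed.
Lemma Wmono m x : W m x -> W m.+1 x.
Proof.
move=> [a ->]; exists (fun j : 'I_m.+1 => oapp a 0 (insub (val j))).
rewrite big_ord_recr /= insubF ?ltnn //= scale0r addr0.
apply: eq_bigr => j _ /=; case: insubP => [k _ /val_inj -> //|].
by rewrite ltn_ord.
Qed.
Lemma Wlast m : W m.+1 (omega m.+1).
Proof.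
exists (fun j : 'I_m.+1 => if val j == m then 1 else 0).
rewrite big_ord_recr /= eqxx scale1r big1 ?add0r // => j _.
by rewrite /= ltn_eqF ?ltn_ord // scale0r.
Qed.
Lemma Wstep m x : W m.+1 x -> exists w t, W m w /\ x = w + t *: omega m.+1.
Proof.
move=> [a ->]; rewrite big_ord_recr /=.
eexists; exists (a ord_max); split; last by [].
by eexists.
Qed.
End Span.

Section Proj.
Variables (R : realType) (V : completeNormedModType R) (inner : V -> V -> R).
Hypothesis Hi : is_inner_product inner.
Variable omega : nat -> V.
Local Notation W := (Wspan omega).

Lemma proj_ex m x : exists p, W m p /\ forall w, W m w -> inner (x - p) w = 0.
Proof.
elim: m x => [|m IH] x.
  exists 0; split; first exact: W0.
  by move=> w [a ->]; rewrite big_ord0 i0r.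
have [p [Wp op]] := IH x.
have [q [Wq oq]] := IH (omega m.+1).
set u := omega m.+1 - q.
have ou : forall w, W m w -> inner u w = 0 by exact: oq.
have [u0|u0] := eqVneq (inner u u) 0.
  have uz : u = 0.
    by apply/eqP; rewrite -normr_eq0 -sqrf_eq0 -(inorm Hi) u0.
  have Wo : W m (omega m.+1).
    suff -> : omega m.+1 = q by [].
    by apply/eqP; rewrite -subr_eq0 -/u uz.
  exists p; split; first exact: Wmono.
  move=> w /Wstep [w' [t [Ww' ->]]].
  by rewrite (iDr Hi) (iZr Hi) op // op // mulr0 addr0.
set c := inner (x - p) u / inner u u.
exists (p + c *: u); split.
  apply: WD; first exact: Wmono.
  apply: WZ; apply: WB; [exact: Wlast | exact: Wmono].
have ow : forall w, W m w -> inner (x - (p + c *: u)) w = 0.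
  move=> w Ww; rewrite opprD addrA (iBl Hi) (iZl Hi) op //.
  by rewrite ou // mulr0 subr0.
move=> w /Wstep [w' [t [Ww' ->]]].
rewrite (iDr Hi) ow // add0r (iZr Hi).
have -> : omega m.+1 = u + q by rewrite /u subrK.
rewrite (iDr Hi) (ow q Wq) addr0.
rewrite opprD addrA (iBl Hi) (iZl Hi) /c divfK // subrr mulr0 //.
Qed.

Lemma proj_spec m x : W m (proj inner (W m) x) /\
  forall w, W m w -> inner (x - proj inner (W m) x) w = 0.
Proof. exact: (xgetPex 0 (proj_ex m x)). Qed.

Lemma proj_best m x w : W m w ->
  `|x - proj inner (W m) x| ^+ 2 <= `|x - w| ^+ 2.
Proof.
move=> Ww; have [Wp op] := proj_spec m x.
have -> : x - w = (x - proj inner (W m) x) + (proj inner (W m) x - w).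
  by rewrite addrA subrK.
rewrite [`|_ + (_ - w)| ^+ 2](normD2 Hi) op ?mulr0 ?addr0 ?lerDl ?sqr_ge0 //.
exact: WB.
Qed.

Lemma proj_inner m x : inner (x - proj inner (W m) x) x =
  `|x - proj inner (W m) x| ^+ 2.
Proof.
have [Wp op] := proj_spec m x.
by rewrite -(inorm Hi) [in RHS](iBr Hi) (op _ Wp) subr0.
Qed.
End Proj.

Lemma sumCS2 (R : realFieldType) n (a b : 'I_n -> R) :
  (\sum_i a i * b i) ^+ 2 <= (\sum_i a i ^+ 2) * (\sum_i b i ^+ 2).
Proof.
set A := \sum_i a i ^+ 2; set B := \sum_i b i ^+ 2; set P := \sum_i a i * b i.
have A0 : 0 <= A by apply: sumr_ge0 => i _; apply: sqr_ge0.
have [Az|Anz] := eqVneq A 0.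
  have az : forall i, a i = 0.
    move=> i; apply/eqP; rewrite -sqrf_eq0; apply/eqP.
    by apply: (psumr_eq0P (fun i _ => sqr_ge0 (a i)) Az).
  by rewrite /P big1 ?expr0n ?mulr_ge0 ?sumr_ge0 // => i _; rewrite ?az ?mul0r ?sqr_ge0.
set t := P / A.
have H : 0 <= \sum_i (a i * t - b i) ^+ 2 by apply: sumr_ge0 => i _; apply: sqr_ge0.
have e : \sum_i (a i * t - b i) ^+ 2 = A * t ^+ 2 - 2 * t * P + B.
  rewrite /A /B /P mulr_suml mulr_sumr -sumrN -!big_split /=.
  by apply: eq_bigr => i _; ring.
rewrite e /t in H.
have : 0 <= (P / A * A * (P / A) - 2 * (P / A) * P + B) * A.
  by apply: mulr_ge0 => //; move: H; congr (0 <= _); ring.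
have -> : (P / A * A * (P / A) - 2 * (P / A) * P + B) * A = A * B - P ^+ 2.
  by field.
by rewrite subr_ge0 mulrC.
Qed.

Lemma sumCS (R : rcfType) n (a b : 'I_n -> R) :
  \sum_i a i * b i <= Num.sqrt (\sum_i a i ^+ 2) * Num.sqrt (\sum_i b i ^+ 2).
Proof.
rewrite -sqrtrM ?sumr_ge0 // => [|i _]; last exact: sqr_ge0.
apply: le_trans (ler_norm _) _; rewrite -sqrtr_sqr.
exact/ler_wsqrtr/sumCS2.
Qed.

Lemma cvg_sumseq (R : realType) (I : Type) (r : seq I) (f : I -> nat -> R) l :
  (forall i, f i @ \oo --> l i) ->
  (fun N => \sum_(i <- r) f i N) @ \oo --> \sum_(i <- r) l i.
Proof.
move=> H; elim: r => [|i r IH].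
  under eq_fun do rewrite big_nil. by rewrite big_nil; apply: cvg_cst.
under eq_fun do rewrite big_cons. rewrite big_cons; exact: cvgD.
Qed.

Lemma lim_le_ub (R : realType) (f : nat -> R) l b :
  f @ \oo --> l -> (forall N, f N <= b) -> l <= b.
Proof.
move=> fl fb; rewrite leNgt; apply/negP => bl.
have [N _ HN] := cvgr_gt l fl b bl.
by have := HN N (leqnn N); rewrite ltNge fb.
Qed.

Section Key.
Variables (R : realType) (V : completeNormedModType R) (inner : V -> V -> R).
Hypothesis Hi : is_inner_product inner.

Lemma cvg_inner (u : nat -> V) y z : u @ \oo --> y ->
  (fun N => inner z (u N)) @ \oo --> inner z y.
Proof.
move=> /cvgrPdist_le H; apply/cvgrPdist_le => e e0.
have e1 : 0 < e / (`|z| + 1) by rewrite divr_gt0 // ltr_wpDl.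
apply: filterS (H _ e1) => N HN.
rewrite -(iBr Hi); apply: le_trans (CSabs Hi _ _) _.
apply: le_trans (ler_wpM2l (normr_ge0 _) HN) _.
rewrite mulrA ler_pdivrMr ?ltr_wpDl // mulrC ler_pM2l //.
by rewrite lerDl.
Qed.

Lemma keyC (D : set V) n (rr psi : 'I_n -> V) (S : R) w c C :
  (forall g, D g -> \sum_i inner (rr i) g ^+ 2 <= S) -> 0 <= S ->
  l1_representation D psi w c -> l1_cost c = C%:E ->
  \sum_i inner (rr i) (psi i) <= C * Num.sqrt S.
Proof.
move=> hS S0 [Dw cv] hC.
have cvf := cvg_sumseq (r := index_enum 'I_n)
  (fun i => cvg_inner (z := rr i) (cv i)).
apply: (lim_le_ub cvf) => N.
have -> : \sum_(i <- index_enum 'I_n) inner (rr i) (series (fun k => c k i *: w k) N)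
  = \sum_(0 <= k < N) \sum_i c k i * inner (rr i) (w k).
  rewrite exchange_big /=; apply: eq_bigr => i _.
  by rewrite /series /= (isumr Hi); apply: eq_bigr => k _; rewrite (iZr Hi).
have le1 : forall k, \sum_i c k i * inner (rr i) (w k) <=
   Num.sqrt (\sum_i c k i ^+ 2) * Num.sqrt S.
  move=> k; apply: le_trans (sumCS _ _) _.
  by rewrite ler_wpM2l ?sqrtr_ge0 // ler_wsqrtr // hS.
apply: le_trans (ler_sum _ (fun k _ => le1 k)) _.
rewrite -mulr_suml ler_wpM2r ?sqrtr_ge0 //.
rewrite -lee_fin -hC -sumEFin.
apply: (@nneseries_lim_ge R (fun k => (Num.sqrt (\sum_i c k i ^+ 2))%:E) xpredT 0 N).
by move=> k _ _; rewrite lee_fin sqrtr_ge0.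
Qed.

Lemma keyE n (rr d : 'I_n -> V) :
  \sum_i inner (rr i) (d i) <=
  Num.sqrt (\sum_i `|rr i| ^+ 2) * Num.sqrt (\sum_i `|d i| ^+ 2).
Proof.
apply: le_trans (sumCS (fun i => `|rr i|) (fun i => `|d i|)).
by apply: ler_sum => i _; apply: CS.
Qed.
End Key.

Section NumL.
Variable R : realFieldType.

Lemma half_le (x y : R) : 0 <= x -> 0 <= y -> (x ^+ 2 - y ^+ 2) / 2 <= x ^+ 2 - x * y.
Proof.
move=> x0 y0; have := sqr_ge0 (x - y).
have -> : (x ^+ 2 - y ^+ 2) / 2 = x ^+ 2 - x * y - (x - y) ^+ 2 / 2 by field.
move=> h; rewrite lerBlDr lerDl; exact: divr_ge0.
Qed.

Lemma step_le (a aa S l k : R) : 0 < l -> 0 < k ->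
  aa <= a - k ^+ 2 * S -> a ^+ 2 <= 4 * l ^+ 2 * S ->
  aa <= a - a ^+ 2 / (4 * l ^+ 2 / k ^+ 2).
Proof.
move=> l0 k0 h1 h2; apply: le_trans h1 _; rewrite lerD2l lerN2.
have -> : a ^+ 2 / (4 * l ^+ 2 / k ^+ 2) = k ^+ 2 * (a ^+ 2 / (4 * l ^+ 2)).
  by field; rewrite !gt_eqF.
by rewrite ler_pM2l ?exprn_gt0 // ler_pdivrMr ?mulr_gt0 ?exprn_gt0 // mulrC.
Qed.

Lemma base_le (a B : R) : 0 < B -> a - a ^+ 2 / B <= B / 2.
Proof.
move=> B0; have h := sqr_ge0 (a - B / 2).
have -> : a - a ^+ 2 / B = B / 4 - (a - B / 2) ^+ 2 / B by field; rewrite gt_eqF.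
have q := divr_ge0 h (ltW B0); lra.
Qed.



Lemma mono_le (x y B : R) : 0 < B -> 0 <= x -> x <= y -> 2 * y <= B ->
  x - x ^+ 2 / B <= y - y ^+ 2 / B.
Proof.
move=> B0 x0 xy yB; rewrite -subr_ge0.
have -> : y - y ^+ 2 / B - (x - x ^+ 2 / B) = (y - x) * (B - x - y) / B.
  by field; rewrite gt_eqF.
apply: divr_ge0; last exact: ltW.
apply: mulr_ge0; lra.
Qed.

Lemma final_le (B : R) (k : nat) : 0 < B ->
  B / k.+1%:R - (B / k.+1%:R) ^+ 2 / B <= B / k.+2%:R.
Proof.
move=> B0; rewrite -subr_ge0.
have n0 : 0 < k.+1%:R :> R by rewrite ltr0n.
have -> : k.+2%:R = k.+1%:R + 1 :> R by rewrite -addn1 natrD.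
set x := k.+1%:R.
have h1 : x != 0 by rewrite gt_eqF.
have h2 : x + 1 != 0 by rewrite gt_eqF // ltr_wpDr.
have h3 : B != 0 by rewrite gt_eqF.
have key : forall y : R, y != 0 -> y + 1 != 0 ->
  B / (y + 1) - (B / y - (B / y) ^+ 2 / B) = B / (y ^+ 2 * (y + 1)).
  by move=> y a b; field; rewrite a b h3.
rewrite key //.
by apply: divr_ge0; [exact: ltW | apply: mulr_ge0; [exact: sqr_ge0 | lra]].
Qed.

End NumL.

Section Rate.
Variable R : rcfType.

Lemma mono_le' (x y B : R) : 0 < B -> 0 <= x -> x <= y -> 2 * y <= B ->
  x - x ^+ 2 / B <= y - y ^+ 2 / B.
Proof. exact: mono_le. Qed.

Lemma rate (rho S : nat -> R) (l E kap : R) :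
  0 <= l -> 0 <= E -> 0 < kap ->
  (forall k, 0 <= rho k) -> (forall k, 0 <= S k) ->
  (forall k, rho k.+1 <= rho k - kap ^+ 2 * S k) ->
  (forall k, rho k - Num.sqrt (rho k) * Num.sqrt E <= l * Num.sqrt (S k)) ->
  forall m, (1 <= m)%N ->
  rho m <= 4 / kap ^+ 2 * (m.+1%:R)^-1 * (l * l) + E.
Proof.
move=> l0 E0 k0 r0 S0 H2 H3 m m1.
have sE := sqr_sqrtr E0.
have sr : forall k, Num.sqrt (rho k) ^+ 2 = rho k by move=> k; exact: sqr_sqrtr.
have sS : forall k, Num.sqrt (S k) ^+ 2 = S k by move=> k; exact: sqr_sqrtr.
have [lz|lp] := eqVneq l 0.
  have h := H3 m; rewrite lz mul0r in h.
  rewrite lz !mulr0 add0r.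
  have x0 := sqrtr_ge0 (rho m); have y0 := sqrtr_ge0 E.
  have e1 := sr m; move: h e1 sE x0 y0.
  move: (Num.sqrt (rho m)) (Num.sqrt E) => x y h e1 e2 x0 y0.
  have q : 0 <= y ^+ 2 - 2 * (x * y) + x ^+ 2.
    by have := sqr_ge0 (y - x); rewrite sqrrB -mulr_natl [y * x]mulrC.
  rewrite -e1 -e2 in h *; lra.
have lpos : 0 < l by rewrite lt_def lp l0.
have [B eB] : {B : R | B = 4 * l ^+ 2 / kap ^+ 2} by eexists.
have B0 : 0 < B by rewrite eB divr_gt0 ?mulr_gt0 ?exprn_gt0.
have [a ea] : {a : nat -> R | forall k, a k = rho k - E} by exists (fun k => rho k - E).
have sq : forall k, 0 <= a k -> a k ^+ 2 <= 4 * l ^+ 2 * S k.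
  move=> k; rewrite ea => ak.
  have h := half_le (sqrtr_ge0 (rho k)) (sqrtr_ge0 E).
  rewrite sr sE in h.
  have h3 := H3 k.
  have t0 : 0 <= l * Num.sqrt (S k) by rewrite mulr_ge0 ?sqrtr_ge0.
  have e : 4 * l ^+ 2 * S k = 4 * (l * Num.sqrt (S k)) ^+ 2 by rewrite exprMn sS; ring.
  rewrite e.
  have : (rho k - E) / 2 <= l * Num.sqrt (S k) by exact: le_trans h h3.
  move: (l * Num.sqrt (S k)) t0 => t t0 h'.
  have a2 : 0 <= (rho k - E) / 2 by rewrite divr_ge0.
  have := ler_pM a2 a2 h' h'.
  have -> : (rho k - E) ^+ 2 = 4 * ((rho k - E) / 2 * ((rho k - E) / 2)) by field.
  by rewrite expr2 => hh; rewrite ler_pM2l.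
have st : forall k, 0 <= a k -> a k.+1 <= a k - a k ^+ 2 / B.
  move=> k ak; rewrite eB; apply: step_le => //; last exact: sq.
  by rewrite !ea; have := H2 k; move: (kap ^+ 2 * S k) => z; lra.
have dec : forall k, a k.+1 <= a k.
  move=> k; rewrite !ea; have := H2 k; have := mulr_ge0 (sqr_ge0 kap) (S0 k).
  move: (kap ^+ 2 * S k) => z; lra.
have main : forall m, a m.+1 <= B / m.+2%:R.
  elim=> [|j IH].
    have [an|ap] := ltP (a 0%N) 0.
      apply: le_trans (dec 0%N) _; apply: le_trans (ltW an) _.
      by rewrite divr_ge0 // ltW.
    by apply: le_trans (st 0%N ap) _; apply: base_le.
  have [an|ap] := ltP (a j.+1) 0.
    apply: le_trans (dec _) _; apply: le_trans (ltW an) _.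
    by rewrite divr_ge0 // ltW.
  apply: le_trans (st _ ap) _.
  apply: le_trans (final_le j.+1 B0).
  apply: mono_le' => //.
  rewrite mulrA ler_pdivrMr ?ltr0n // mulrC ler_pM2l //.
  by rewrite ler_nat.
case: m m1 => [//|m] _.
have := main m; rewrite ea => h.
have e : B / m.+2%:R = 4 / kap ^+ 2 * (m.+2%:R)^-1 * (l * l).
  by rewrite eB expr2; ring.
rewrite -e; move: (B / m.+2%:R) h => z h; lra.
Qed.
End Rate.

Theorem theorem2 (R : realType) (V : completeNormedModType R)
    (inner : V -> V -> R) (D : set V) (n : nat) (phi : 'I_n -> V)
    (kappa : R) (omega : nat -> V) :
  is_inner_product inner ->
  is_dictionary D ->
  is_orthonormal inner phi ->
  0 < kappa < 1 ->
  collective_omp inner D phi kappa omega ->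
  forall (psi : 'I_n -> V) (m : nat), (1 <= m)%N ->
    ((residual inner phi omega m)%:E <=
     (4 / kappa ^+ 2 * (m.+1%:R)^-1)%:E * (l1_norm D psi * l1_norm D psi)
     + (\sum_(i < n) `|phi i - psi i| ^+ 2)%:E)%E.
Proof.
move=> Hi [Dn _] _ /andP[k0 _] omp psi m m1.
pose rr k i := phi i - proj inner (Wspan omega k) (phi i).
pose F k w := \sum_i inner (rr k i) w ^+ 2.
pose S k := sup [set F k w | w in D].
pose rho k := residual inner phi omega k.
pose E := \sum_(i < n) `|phi i - psi i| ^+ 2.
have E0 : 0 <= E by apply: sumr_ge0 => i _; exact: sqr_ge0.
have rho0 : forall k, 0 <= rho k by move=> k; apply: sumr_ge0 => i _; exact: sqr_ge0.
have Fle : forall k w, D w -> F k w <= rho k.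
  move=> k w Dw; apply: ler_sum => i _.
  by have := CS2 Hi (rr k i) w; rewrite (Dn w Dw) expr1n mulr1.
have F0 : forall k w, 0 <= F k w by move=> k w; apply: sumr_ge0 => i _; exact: sqr_ge0.
have ub : forall k, has_ubound [set F k w | w in D].
  by move=> k; exists (rho k) => _ [w Dw <-]; exact: Fle.
have FS : forall k w, D w -> F k w <= S k.
  by move=> k w Dw; apply: ub_le_sup (ub k) _ _; exists w.
have S0 : forall k, 0 <= S k.
  by move=> k; apply: le_trans (F0 k (omega k.+1)) (FS _ _ (omp k).1).
have dec : forall k, rho k.+1 <= rho k - kappa ^+ 2 * S k.
  move=> k; have [Dw hk] := omp k.
  apply: (@le_trans _ _ (rho k - F k (omega k.+1))); last first.
    by rewrite lerD2l lerN2.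
  rewrite /rho /residual /F -sumrB; apply: ler_sum => i _.
  set t := inner (rr k i) (omega k.+1).
  have Ww : Wspan omega k.+1 (proj inner (Wspan omega k) (phi i) + t *: omega k.+1).
    apply: WD; [apply: Wmono; exact: (proj_spec Hi omega k (phi i)).1 | apply: WZ; exact: Wlast].
  apply: le_trans (proj_best Hi (phi i) Ww) _.
  rewrite opprD addrA -/(rr k i) (normB2 Hi) (iZr Hi) normrZ (Dn _ Dw) mulr1 -/t.
  rewrite real_normK ?num_real // le_eqVlt; apply/orP; left; apply/eqP; ring.
have key : forall l, l1_norm D psi = l%:E ->
    forall k, rho k - Num.sqrt (rho k) * Num.sqrt E <= l * Num.sqrt (S k).
  move=> l hl k.
  have eqr : rho k = \sum_i inner (rr k i) (psi i) + \sum_i inner (rr k i) (phi i - psi i).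
    rewrite -big_split /rho /residual; apply: eq_bigr => i _.
    by rewrite /= (iBr Hi) addrCA subrr addr0 -(proj_inner Hi).
  have hE : \sum_i inner (rr k i) (phi i - psi i) <= Num.sqrt (rho k) * Num.sqrt E.
    exact: keyE.
  have hP : forall e, 0 < e -> \sum_i inner (rr k i) (psi i) <= (l + e) * Num.sqrt (S k).
    move=> e e0.
    have fin : ereal_inf [set l1_cost c | c in
        [set c | exists w, l1_representation D psi w c]] \is a fin_num.
      by rewrite -/(l1_norm D psi) hl.
    have [x [c [w rep] <-] hx] := lb_ereal_inf_adherent e0 fin.
    rewrite -/(l1_norm D psi) hl in hx.
    have c0 : (0 <= l1_cost c)%E.
      by apply: nneseries_ge0 => j _ _; rewrite lee_fin sqrtr_ge0.
    have cf : l1_cost c \is a fin_num.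
      by rewrite ge0_fin_numE // (lt_trans hx) // ltry.
    have hC := keyC Hi (rr := rr k) (fun g Dg => FS k g Dg) (S0 k) rep (esym (fineK cf)).
    apply: le_trans hC _; rewrite ler_wpM2r ?sqrtr_ge0 //.
    by rewrite -lee_fin fineK // ltW.
  have hX : rho k - Num.sqrt (rho k) * Num.sqrt E <= \sum_i inner (rr k i) (psi i).
    by rewrite {1}eqr; move: hE; move: (\sum_i inner (rr k i) (phi i - psi i)) => z; lra.
  apply/ler_addgt0Pr => e e0.
  set s := Num.sqrt (S k).
  have s0 : 0 <= s by exact: sqrtr_ge0.
  have e1 : 0 < e / (s + 1) by rewrite divr_gt0 // ltr_wpDl.
  apply: le_trans hX _; apply: le_trans (hP _ e1) _.
  rewrite mulrDl lerD2l mulrAC ler_pdivrMr ?ltr_wpDl // ler_pM2l //.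
  by rewrite lerDl.
have L0 : (0 <= l1_norm D psi)%E.
  apply: le_ereal_inf_tmp => _ [c _ <-].
  by apply: nneseries_ge0 => j _ _; rewrite lee_fin sqrtr_ge0.
move: L0; case hL : (l1_norm D psi) => [l| |] L0 //.
  have l0 : 0 <= l by rewrite -lee_fin.
  have := rate l0 E0 k0 rho0 S0 dec (key l hL) m1.
  by rewrite -!EFinM -EFinD lee_fin.
rewrite mulyy muleC gt0_mulye ?lte_fin ?mulr_gt0 ?divr_gt0 ?exprn_gt0 ?invr_gt0 ?ltr0n //.
  by rewrite addye ?leey.
by rewrite exprn_gt0.
Qed.
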